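(* Let $G=(V,E)$ be a finite simple connected graph with at least one edge, let $s$ be a positive integer, and let $G_s=(V_s,E_s)$ be its $s$-th subdivision graph. Then $$4|E_s|\sum_{e_{ij}\in E_s} d_i d_j-\Big[\sum_{e_{ij}\in E_s}(d_i+d_j)\Big]^2=-\Big[\sum_{e_{uv}\in E}(d_u+d_v-4)\Big]^2,$$ where degrees on the left are taken in $G_s$ and degrees on the right in $G$.
   Context: The $s$-th subdivision graph $G_s$ of $G$ is obtained by inserting $s$ new vertices into each edge of $G$ (replacing each edge by a path with $s$ internal vertices). $d_u$ denotes degree; sums over edges count each edge once. *)

(* Defs.v *)
From mathcomp Require Import all_boot all_order all_algebra.

Section Graphs.
Variable T : finType.

Definition simple_graph (e : rel T) := symmetric e /\ irreflexive e.
Definition connected_graph (e : rel T) := forall x y, connect e x y.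

Definition edges (e : rel T) : {set {set T}} :=
  [set [set p.1; p.2] | p in [pred p : T * T | e p.1 p.2]].

Definition deg (e : rel T) (x : T) : nat := #|[set y | e x y]|.

(* An orientation of each edge (u,v) with u before v in enum order,
   used to label the subdivision vertices along the path from u to v. *)
Definition oedge (e : rel T) (x : T * T) : bool :=
  e x.1 x.2 && (enum_rank x.1 < enum_rank x.2)%N.

(* Vertices of G_s: original vertices, plus s new vertices (x,k),
   k < s, for each edge x of G. *)
Definition subdiv_vert (e : rel T) (s : nat) : finType :=
  (T + ({x : T * T | oedge e x} * 'I_s))%type.

(* Adjacency of G_s: edge x = (u,v) becomes the path
   u - (x,0) - (x,1) - ... - (x,s-1) - v.  (For s = 0 it is G.) *)
Definition subdiv (e : rel T) (s : nat) : rel (subdiv_vert e s) :=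
  fun a b =>
  match a, b with
  | inl u, inl v => (s == 0) && e u v
  | inl u, inr (x, k) | inr (x, k), inl u =>
      ((nat_of_ord k == 0) && (u == (val x).1))
      || ((nat_of_ord k == s.-1) && (u == (val x).2))
  | inr (x, k), inr (y, l) =>
      (x == y) && (((nat_of_ord k).+1 == l) || ((nat_of_ord l).+1 == k))
  end.

End Graphs.
Arguments simple_graph {T}. Arguments connected_graph {T}. Arguments edges {T}.
Arguments deg {T}. Arguments oedge {T}. Arguments subdiv_vert {T}. Arguments subdiv {T}.

(* Main.v *)
Require Import Defs.
From mathcomp Require Import all_boot all_order all_algebra ring zify.

Section Gen.
Variable U : finType.
Variable r : rel U.
Hypothesis rsym : symmetric r.
Hypothesis rirr : irreflexive r.

Lemma set2_eqE (x y a b : U) : x != y ->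
  ([set x; y] == [set a; b]) = ((x == a) && (y == b)) || ((x == b) && (y == a)).
Proof.
move=> nxy; apply/idP/idP.
- move/eqP=> E.
  have hx : x \in [set a; b] by rewrite -E !inE eqxx.
  have hy : y \in [set a; b] by rewrite -E !inE eqxx orbT.
  move: hx hy nxy; rewrite !inE => /orP[]/eqP-> /orP[]/eqP->; rewrite ?eqxx ?orbT //=.
- by case/orP=> /andP[/eqP-> /eqP->] //; rewrite setUC.
Qed.

Lemma edges_double (h : {set U} -> nat) :
  2 * (\sum_(f in edges r) h f) = \sum_a \sum_b (if r a b then h [set a; b] else 0).
Proof.
transitivity (\sum_(p : U * U | r p.1 p.2) h [set p.1; p.2]); last first.
  rewrite (eq_bigr (fun a => \sum_(b | r a b) h [set a; b])); last first.
    by move=> a _; rewrite [RHS]big_mkcond.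
  by rewrite pair_big_dep.
rewrite (partition_big (fun p : U * U => [set p.1; p.2]) (mem (edges r))) /=; last first.
  by move=> p rp; apply/imsetP; exists p.
rewrite big_distrr /=; apply: eq_bigr => f /imsetP[[a b] rab ->].
rewrite inE /= in rab.
rewrite (eq_bigr (fun _ => h [set a; b])); last by move=> p /andP[_ /eqP ->].
rewrite sum_nat_const /=; congr (_ * _).
have nab : a != b by apply: contraTneq rab => ->; rewrite rirr.
have -> : 2 = #|[set (a, b); (b, a)]| by rewrite cards2 xpair_eqE negb_and nab.
apply: eq_card => [[x y]] /=; rewrite !inE /= !xpair_eqE.
case rxy: (r x y) => /=.
  have nxy : x != y by apply: contraTneq rxy => ->; rewrite rirr.
  by rewrite unfold_in /= rxy set2_eqE.
rewrite unfold_in /= rxy /=.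
apply/negbTE; apply/negP => /orP[]/andP[/eqP Ex /eqP Ey]; subst.
  by rewrite rab in rxy.
by rewrite rsym rab in rxy.
Qed.

Lemma oedge_sum (g : U -> U -> nat) :
  \sum_(x : {x : U * U | oedge r x}) (g (val x).1 (val x).2 + g (val x).2 (val x).1)
  = \sum_a \sum_b (if r a b then g a b else 0).
Proof.
rewrite -(big_sub (mem (oedge r)) (fun p : U * U => g p.1 p.2 + g p.2 p.1)) /=.
transitivity (\sum_(p : U * U | r p.1 p.2) g p.1 p.2); last first.
  rewrite (eq_bigr (fun a => \sum_(b | r a b) g a b)); last first.
    by move=> a _; rewrite [RHS]big_mkcond.
  by rewrite pair_big_dep.
rewrite big_split /= [RHS](bigID (fun p : U * U => enum_rank p.1 < enum_rank p.2)%N) /=.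
congr (_ + _).
rewrite [RHS](reindex_inj (h := fun p : U * U => (p.2, p.1))) /=; last first.
  by move=> [x y] [x' y'] /= [-> ->].
apply: eq_bigl => [[x y]] /=; rewrite unfold_in /oedge /= rsym.
case rxy: (r y x) => //=.
have nxy : y != x by apply: contraTneq rxy => ->; rewrite rirr.
have : enum_rank y != enum_rank x.
  by apply: contra nxy => /eqP/enum_rank_inj ->.
by rewrite neq_ltn; case: ltngtP.
Qed.
End Gen.


Lemma if_or (a b : bool) (G : nat) : ~~ (a && b) ->
  (if a || b then G else 0) = (if a then G else 0) + (if b then G else 0).
Proof. by case: a; case: b => //= _; rewrite ?addn0. Qed.

Lemma sum_if_eq (I : finType) (c : I) (b : bool) (G : I -> nat) :
  \sum_i (if b && (i == c) then G i else 0) = if b then G c else 0.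
Proof.
case: b => /=; last by rewrite big1.
by rewrite (bigD1 c) //= eqxx big1 ?addn0 // => i /negbTE ->.
Qed.

Lemma sum_ord_eq (n c : nat) (G : nat) :
  \sum_(k < n) (if (k == c :> nat) then G else 0) = if (c < n)%N then G else 0.
Proof.
case: ltnP => h.
  rewrite (bigD1 (Ordinal h)) //= eqxx big1 ?addn0 // => k nk.
  by rewrite ifF //; apply: contraNF nk => /eqP kc; apply/eqP/val_inj.
by apply: big1 => k _; rewrite ifF //; apply/negbTE; have := ltn_ord k; lia.
Qed.

Lemma deg_sum (U : finType) (r : rel U) a :
  deg r a = \sum_b (if r a b then 1 else 0).
Proof. by rewrite /deg -sum1_card big_mkcond; apply: eq_bigr => b _; rewrite inE. Qed.

Section Sub.
Variable T : finType.
Variable e : rel T.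
Variable s : nat.
Hypothesis spos : (0 < s)%N.

Definition cc (u : T) (x : {x : T * T | oedge e x}) (k : 'I_s) : bool :=
  ((k == 0 :> nat) && (u == (val x).1)) || ((k == s.-1 :> nat) && (u == (val x).2)).

Lemma block (F : subdiv_vert e s -> subdiv_vert e s -> nat) :
  \sum_a \sum_b (if subdiv e s a b then F a b else 0) =
  \sum_u \sum_(x : {x : T * T | oedge e x}) \sum_(k < s) (if cc u x k then F (inl u) (inr (x, k)) else 0)
  + \sum_(x : {x : T * T | oedge e x}) \sum_(k < s) \sum_u (if cc u x k then F (inr (x, k)) (inl u) else 0)
  + \sum_(x : {x : T * T | oedge e x}) \sum_(k < s) \sum_(l < s) (if (k.+1 == l :> nat) || (l.+1 == k :> nat)
                           then F (inr (x, k)) (inr (x, l)) else 0).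
Proof.
rewrite big_sumType /=.
rewrite -addnA; congr (_ + _).
  apply: eq_bigr => u _; rewrite big_sumType /= big1 ?add0n; last first.
    by move=> v _; rewrite (negbTE (lt0n_neq0 spos)).
  rewrite pair_big /=. apply eq_bigr. move=> [x k] _ //.
rewrite -big_split /=.
under [RHS]eq_bigr do rewrite -big_split /=.
rewrite [RHS]pair_big /=; apply: eq_bigr => [[x k]] _ /=.
rewrite big_sumType /=; congr (_ + _).
transitivity (\sum_(y : {x : T * T | oedge e x}) \sum_(l < s)
   (if (x == y) && ((k.+1 == l :> nat) || (l.+1 == k :> nat)) then F (inr (x, k)) (inr (y, l)) else 0)).
  by rewrite pair_big; apply: eq_big => // -[y l].
rewrite (bigD1 x) //= [X in _ + X]big1 ?addn0.
  by apply: eq_bigr => l _; rewrite eqxx.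
by move=> y /negbTE nyx; apply: big1 => l _; rewrite eq_sym nyx.
Qed.

Hypothesis eirr : irreflexive e.

Lemma oedge_neq (x : {x : T * T | oedge e x}) : (val x).1 != (val x).2.
Proof.
have := valP x; rewrite /oedge => /andP[ex _].
by apply: contraTneq ex => ->; rewrite eirr.
Qed.

Lemma sum_cc u x G :
  \sum_(k < s) (if cc u x k then G else 0)
  = (if u == (val x).1 then G else 0) + (if u == (val x).2 then G else 0).
Proof.
have n12 := oedge_neq x; rewrite /cc.
case: (eqVneq u (val x).1) => [->|nu1].
  rewrite (negbTE n12) /=.
  under eq_bigr do rewrite andbT andbF orbF.
  by rewrite sum_ord_eq spos addn0.
rewrite /=; under eq_bigr do rewrite andbF /=.
rewrite add0n; case: eqP => _.
  under eq_bigr do rewrite andbT.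
  by rewrite sum_ord_eq ltn_predL spos.
by rewrite big1 // => k _; rewrite andbF.
Qed.

Lemma sum_adj (k : nat) G : (k < s)%N ->
  \sum_(l < s) (if (k.+1 == l :> nat) || (l.+1 == k :> nat) then G else 0)
  = (if (k.+1 < s)%N then G else 0) + (if (0 < k)%N then G else 0).
Proof.
move=> ks.
rewrite (eq_bigr (fun l : 'I_s => (if (l == k.+1 :> nat) then G else 0)
    + (if (0 < k)%N && (l == k.-1 :> nat) then G else 0))); last first.
  move=> l _; rewrite -if_or; last by lia.
  by congr (if _ then _ else _); lia.
rewrite big_split /= sum_ord_eq; congr (_ + _).
case: k ks => [|k] ks /=; first by rewrite big1.
by rewrite sum_ord_eq; case: ltnP => //; lia.
Qed.

Lemma sum_adj2 G :
  \sum_(k < s) ((if (k.+1 < s)%N then G else 0) + (if (0 < k)%N then G else 0))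
  = (2 * s.-1) * G.
Proof.
case: s spos => // n _ /=.
rewrite big_split /= big_ord_recr /= ltnn addn0 big_ord_recl /=.
rewrite (eq_bigr (fun _ => G)); last by move=> i _; rewrite /= ltnS ltn_ord.
rewrite [X in _ + (0 + X)](eq_bigr (fun _ => G)) //.
by rewrite !sum_nat_const card_ord; ring.
Qed.

Hypothesis esym : symmetric e.

Lemma N1 u (G : subdiv_vert e s -> nat) :
  \sum_b (if subdiv e s (inl u) b then G b else 0) =
  \sum_(x : {x : T * T | oedge e x}) \sum_(k < s) (if cc u x k then G (inr (x, k)) else 0).
Proof.
rewrite big_sumType /= big1 ?add0n; last first.
  by move=> v _; rewrite (negbTE (lt0n_neq0 spos)).
by rewrite [RHS]pair_big /=; apply: eq_bigr => [[x k]] _.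
Qed.

Lemma N2 x k (G : subdiv_vert e s -> nat) :
  \sum_b (if subdiv e s (inr (x, k)) b then G b else 0) =
  \sum_u (if cc u x k then G (inl u) else 0)
  + \sum_(l < s) (if (k.+1 == l :> nat) || (l.+1 == k :> nat) then G (inr (x, l)) else 0).
Proof.
rewrite big_sumType /=; congr (_ + _).
transitivity (\sum_(y : {x : T * T | oedge e x}) \sum_(l < s)
   (if (x == y) && ((k.+1 == l :> nat) || (l.+1 == k :> nat)) then G (inr (y, l)) else 0)).
  by rewrite pair_big; apply: eq_big => // -[y l].
rewrite (bigD1 x) //= [X in _ + X]big1 ?addn0.
  by apply: eq_bigr => l _; rewrite eqxx.
by move=> y /negbTE nyx; apply: big1 => l _; rewrite eq_sym nyx.
Qed.

Lemma Dl u : deg (subdiv e s) (inl u) = deg e u.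
Proof.
rewrite deg_sum N1.
under eq_bigr do rewrite sum_cc.
rewrite (@oedge_sum T e esym eirr (fun a b => if u == a then 1 else 0)).
rewrite (bigD1 u) //= [X in _ + X]big1 ?addn0; last first.
  by move=> a /negbTE nau; apply: big1 => b _; rewrite eq_sym nau; case: ifP.
by rewrite deg_sum; apply: eq_bigr => b _; rewrite eqxx.
Qed.

Lemma Dr p : deg (subdiv e s) (inr p) = 2.
Proof.
case: p => x k.
rewrite deg_sum N2 sum_adj //.
have n12 := oedge_neq x.
rewrite (eq_bigr (fun u => (if (k == 0 :> nat) && (u == (val x).1) then 1 else 0)
     + (if (k == s.-1 :> nat) && (u == (val x).2) then 1 else 0))); last first.
  move=> u _; rewrite /cc if_or //; apply/negP => /andP[/andP[_ /eqP h1] /andP[_ /eqP h2]].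
  by move: n12; rewrite -h1 -h2 eqxx.
rewrite big_split /= !sum_if_eq.
have := ltn_ord k; case: (nat_of_ord k) => [|kk]; case: s spos => // n _ /=.
  all: move=> ?; do 2 (case: ifP => ?); lia.
Qed.

Lemma sum_if_eq1 (I : finType) (c : I) (G : I -> nat) :
  \sum_i (if i == c then G i else 0) = G c.
Proof. by rewrite (bigD1 c) //= eqxx big1 ?addn0 // => i /negbTE ->. Qed.

Lemma blockH (H : nat -> nat -> nat) :
  \sum_a \sum_b (if subdiv e s a b then H (deg (subdiv e s) a) (deg (subdiv e s) b) else 0) =
  \sum_(x : {x : T * T | oedge e x})
    ((H (deg e (val x).1) 2 + H (deg e (val x).2) 2)
     + (H 2 (deg e (val x).1) + H 2 (deg e (val x).2)) + 2 * s.-1 * H 2 2).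
Proof.
rewrite (block (fun a b => H (deg (subdiv e s) a) (deg (subdiv e s) b))) !big_split /=.
congr (_ + _ + _).
- transitivity (\sum_u \sum_(x : {x : T * T | oedge e x})
     ((if u == (val x).1 then H (deg e u) 2 else 0) + (if u == (val x).2 then H (deg e u) 2 else 0))).
    apply: eq_bigr => u _; apply: eq_bigr => x _; rewrite -sum_cc.
    by apply: eq_bigr => k _; rewrite Dl Dr.
  by rewrite exchange_big -big_split; apply: eq_bigr => x _; rewrite big_split /= !sum_if_eq1.
- rewrite -big_split; apply: eq_bigr => x _; rewrite exchange_big.
  transitivity (\sum_u ((if u == (val x).1 then H 2 (deg e u) else 0) + (if u == (val x).2 then H 2 (deg e u) else 0))).
    apply: eq_bigr => u _; rewrite -sum_cc.
    by apply: eq_bigr => k _; rewrite Dl Dr.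
  by rewrite big_split /= !sum_if_eq1.
- apply: eq_bigr => x _.
  transitivity (\sum_(k < s) \sum_(l < s) (if (k.+1 == l :> nat) || (l.+1 == k :> nat) then H 2 2 else 0)).
    by apply: eq_bigr => k _; apply: eq_bigr => l _; rewrite !Dr.
  rewrite (eq_bigr (fun k : 'I_s => (if (k.+1 < s)%N then H 2 2 else 0) + (if (0 < k)%N then H 2 2 else 0))).
    by rewrite sum_adj2.
  by move=> k _; rewrite sum_adj.
Qed.

Lemma subdiv_sym : symmetric (subdiv e s).
Proof.
move=> [u|[x k]] [v|[y l]] //=; first by rewrite esym.
by rewrite eq_sym orbC.
Qed.

Lemma subdiv_irr : irreflexive (subdiv e s).
Proof.
move=> [u|[x k]] /=; first by rewrite eirr andbF.
rewrite eqxx orbb /=; apply/negbTE; lia.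
Qed.
End Sub.

Import GRing.Theory Num.Theory.

Lemma lin (T : finType) (e : rel T) (a b : nat) :
  \sum_(x : {x : T * T | oedge e x}) (a * (deg e (val x).1 + deg e (val x).2) + b * 1)
  = a * \sum_(x : {x : T * T | oedge e x}) (deg e (val x).1 + deg e (val x).2)
    + b * \sum_(x : {x : T * T | oedge e x}) 1.
Proof. by rewrite big_split /= -!big_distrr. Qed.

Local Open Scope ring_scope.

Theorem lemma3 (T : finType) (e : rel T) (s : nat) :
  simple_graph e -> connected_graph e -> (exists x y, e x y) -> (0 < s)%N ->
  4 * (#|edges (subdiv e s)|)%:Z
      * (\sum_(f in edges (subdiv e s)) \prod_(i in f) deg (subdiv e s) i)%N%:Z
    - ((\sum_(f in edges (subdiv e s)) \sum_(i in f) deg (subdiv e s) i)%N%:Z) ^+ 2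
  = - (\sum_(f in edges e) ((\sum_(i in f) deg e i)%N%:Z - 4)) ^+ 2.
Proof.
Local Open Scope nat_scope.
move=> [esym eirr] _ _ spos.
have rs : symmetric (subdiv e s) by apply: subdiv_sym.
have ri : irreflexive (subdiv e s) by apply: subdiv_irr.
set N := \sum_(x : {x : T * T | oedge e x}) 1.
set Q := \sum_(x : {x : T * T | oedge e x}) (deg e (val x).1 + deg e (val x).2).
set t := s.-1.
have E1 : 2 * #|edges (subdiv e s)| = (4 + 2 * t) * N.
  rewrite -sum1_card (@edges_double _ _ rs ri (fun _ => 1)).
  transitivity (\sum_(x : {x : T * T | oedge e x}) ((1 + 1) + (1 + 1) + 2 * s.-1 * 1)).
    exact: (@blockH _ _ _ spos eirr esym (fun _ _ => 1)).
  rewrite (eq_bigr (fun x => 0 * (deg e (val x).1 + deg e (val x).2) + (4 + 2 * t) * 1)).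
    by rewrite lin mul0n add0n.
  by move=> x _; rewrite /t; ring.
have E2 : 2 * (\sum_(f in edges (subdiv e s)) \prod_(i in f) deg (subdiv e s) i)
    = 4 * Q + (8 * t) * N.
  rewrite (@edges_double _ _ rs ri (fun f => \prod_(i in f) deg (subdiv e s) i)).
  transitivity (\sum_a \sum_b (if subdiv e s a b then
                  muln (deg (subdiv e s) a) (deg (subdiv e s) b) else 0)).
    apply: eq_bigr => a _; apply: eq_bigr => b _; case: ifP => // rab.
    have nab : a != b by apply: contraTneq rab => ->; rewrite ri.
    by rewrite big_setU1 ?big_set1 //= inE.
  transitivity (\sum_(x : {x : T * T | oedge e x})
     ((deg e (val x).1 * 2 + deg e (val x).2 * 2) + (2 * deg e (val x).1 + 2 * deg e (val x).2)
       + 2 * s.-1 * (2 * 2))).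
    exact: (@blockH _ _ _ spos eirr esym muln).
  rewrite (eq_bigr (fun x => 4 * (deg e (val x).1 + deg e (val x).2) + (8 * t) * 1)).
    by rewrite lin.
  by move=> x _; rewrite /t; ring.
have E3 : 2 * (\sum_(f in edges (subdiv e s)) \sum_(i in f) deg (subdiv e s) i)
    = 2 * Q + (8 + 8 * t) * N.
  rewrite (@edges_double _ _ rs ri (fun f => \sum_(i in f) deg (subdiv e s) i)).
  transitivity (\sum_a \sum_b (if subdiv e s a b then
                  addn (deg (subdiv e s) a) (deg (subdiv e s) b) else 0)).
    apply: eq_bigr => a _; apply: eq_bigr => b _; case: ifP => // rab.
    have nab : a != b by apply: contraTneq rab => ->; rewrite ri.
    by rewrite big_setU1 ?big_set1 //= inE.
  transitivity (\sum_(x : {x : T * T | oedge e x})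
     ((addn (deg e (val x).1) 2 + addn (deg e (val x).2) 2) + (addn 2 (deg e (val x).1) + addn 2 (deg e (val x).2))
       + 2 * s.-1 * (addn 2 2))).
    exact: (@blockH _ _ _ spos eirr esym addn).
  rewrite (eq_bigr (fun x => 2 * (deg e (val x).1 + deg e (val x).2) + (8 + 8 * t) * 1)).
    by rewrite lin.
  by move=> x _; rewrite /t; ring.
have G1 : 2 * #|edges e| = 2 * N.
  rewrite -sum1_card (@edges_double _ _ esym eirr (fun _ => 1)).
  transitivity (\sum_(x : {x : T * T | oedge e x}) (1 + 1)).
    by symmetry; exact: (@oedge_sum _ _ esym eirr (fun _ _ => 1)).
  rewrite (eq_bigr (fun x => 0 * (deg e (val x).1 + deg e (val x).2) + 2 * 1)).
    by rewrite lin.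
  by move=> x _; ring.
have G2 : 2 * (\sum_(f in edges e) \sum_(i in f) deg e i) = 2 * Q.
  rewrite (@edges_double _ _ esym eirr (fun f => \sum_(i in f) deg e i)).
  transitivity (\sum_a \sum_b (if e a b then addn (deg e a) (deg e b) else 0)).
    apply: eq_bigr => a _; apply: eq_bigr => b _; case: ifP => // rab.
    have nab : a != b by apply: contraTneq rab => ->; rewrite eirr.
    by rewrite big_setU1 ?big_set1 //= inE.
  transitivity (\sum_(x : {x : T * T | oedge e x})
     (addn (deg e (val x).1) (deg e (val x).2) + addn (deg e (val x).2) (deg e (val x).1))).
    by symmetry; exact: (@oedge_sum _ _ esym eirr (fun a b => addn (deg e a) (deg e b))).
  rewrite (eq_bigr (fun x => 2 * (deg e (val x).1 + deg e (val x).2) + 0 * 1)).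
    by rewrite lin mul0n addn0.
  by move=> x _; ring.
have Es : #|edges (subdiv e s)| = (2 + t) * N.
  by apply/eqP; rewrite -(eqn_pmul2l (isT : (0 < 2)%N)) E1; apply/eqP; ring.
have Ps : (\sum_(f in edges (subdiv e s)) \prod_(i in f) deg (subdiv e s) i) = 2 * Q + 4 * t * N.
  by apply/eqP; rewrite -(eqn_pmul2l (isT : (0 < 2)%N)) E2; apply/eqP; ring.
have Ss : (\sum_(f in edges (subdiv e s)) \sum_(i in f) deg (subdiv e s) i) = Q + (4 + 4 * t) * N.
  by apply/eqP; rewrite -(eqn_pmul2l (isT : (0 < 2)%N)) E3; apply/eqP; ring.
have Ms : #|edges e| = N.
  by apply/eqP; rewrite -(eqn_pmul2l (isT : (0 < 2)%N)) G1.
have As : (\sum_(f in edges e) \sum_(i in f) deg e i) = Q.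
  by apply/eqP; rewrite -(eqn_pmul2l (isT : (0 < 2)%N)) G2.
rewrite Es Ps Ss sumrB sumr_const Ms.
rewrite -(big_morph Posz PoszD (erefl (Posz 0))) As.
rewrite /t ?PoszD ?PoszM ?PoszD ?PoszM.
ring.
Qed.
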